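(* Let $m$ be an odd integer $\ge5$ and $l\ge(m+1)/2$. For any $u_1,\ldots,u_m\in V$, $$(\pi\otimes1_V^{\otimes m-4}\otimes\pi)(1_V^{\otimes m}\otimes C^{\otimes l})|u_1u_2\cdots u_m\omega_0^l| = (\pi\otimes1_V^{\otimes m-4}\otimes\pi)\big((2g)^lu_1u_2\cdots u_m+(-1)^l\Phi(u)\big),$$ where $$\Phi(u)=\sum_{\substack{1\le k\le m-1\\ k\text{ odd}}}(-1)^{\frac{k-1}2}\Big(\mathrm{Cont}(u_{m-k+1}\cdots u_{m-1})\,u_m\omega_0^{\frac{k-1}2}u_1u_2\cdots u_{m-k}+\mathrm{Cont}(u_2\cdots u_k)\,u_{k+1}\cdots u_m\omega_0^{\frac{k-1}2}u_1\Big).$$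
   Context: $\mathbb{K}$ is a field of characteristic zero and $V$ a symplectic $\mathbb{K}$-vector space of dimension $2g$ with symplectic basis $a_1,\ldots,a_g,b_1,\ldots,b_g$; $\omega_0=\sum_i(a_i\otimes b_i-b_i\otimes a_i)\in V^{\otimes 2}$. $C\colon V^{\otimes2}\to\mathbb{K}$ is bilinear with $C(a_i\otimes b_j)=\delta_{ij}$, $C(b_i\otimes a_j)=-\delta_{ij}$, $C(a_i\otimes a_j)=C(b_i\otimes b_j)=0$ (so $C(\omega_0)=2g$); $Q=\ker C$ and $\pi\colon V^{\otimes2}\to Q$ is the projection along the decomposition $V^{\otimes2}=Q\oplus\mathbb{K}\omega_0$. Products are taken in the tensor algebra $T(V)$. Here $|\cdot|$ is the cyclic symmetrization $|x_1x_2\cdots x_N|=\sum_{k=0}^{N-1}\nu^k(x_1\cdots x_N)$ for $x_i\in V$, where $\nu(x_1x_2\cdots x_N)=x_2\cdots x_Nx_1$ (this identifies $T(V)/[T(V),T(V)]$ with cyclically invariant tensors). $C^{\otimes l}$ is applied to the last $2l$ tensor factors in consecutive pairs. For $v_1,\ldots,v_{2r}\in V$, $\mathrm{Cont}(v_1v_2\cdots v_{2r})=C(v_1\otimes v_2)C(v_3\otimes v_4)\cdots C(v_{2r-1}\otimes v_{2r})$ (equal to $1$ for $r=0$). *)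

(* Defs.v *)
From mathcomp Require Import all_boot all_order all_algebra.
Set Implicit Arguments. Unset Strict Implicit. Unset Printing Implicit Defensive.
Import GRing.Theory.
Local Open Scope ring_scope.

(* Model: V = K^(2g) with basis e_0..e_(2g-1); a_i = e_i, b_i = e_(g+i)
   (i < g).  An element of (the completion of) T(V) is given by its
   coordinates on basis words: a function  seq 'I_(g+g) -> K. *)

Section TensorDefs.
Variables (K : fieldType) (g : nat).

Definition idx := 'I_(g + g).
Definition vec := idx -> K.
Definition word := seq idx.
Definition tens := word -> K.

(* matrix of C: C(e_i (x) e_j); also the coefficients of omega_0 *)
Definition cmat (i j : idx) : K :=
  if ((i < g)%N && (nat_of_ord j == i + g)%N) then 1
  else if ((j < g)%N && (nat_of_ord i == j + g)%N) then -1 else 0.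

Definition tone : tens := fun w => (w == [::])%:R.
Definition tvec (v : vec) : tens := fun w => if w is [:: i] then v i else 0.
Definition tomega : tens := fun w => if w is [:: i; j] then cmat i j else 0.
Definition tadd (x y : tens) : tens := fun w => x w + y w.
Definition tscale (a : K) (x : tens) : tens := fun w => a * x w.
Definition tmul (x y : tens) : tens :=
  fun w => \sum_(k < (size w).+1) x (take k w) * y (drop k w).
Definition tprod (s : seq tens) : tens := foldr tmul tone s.
Definition texp (x : tens) (n : nat) : tens := iter n (tmul x) tone.

(* cyclic symmetrization |x| = sum_{k=0}^{N-1} nu^k x in each degree N,
   nu(x_1 x_2 ... x_N) = x_2 ... x_N x_1 *)
Definition cyc (x : tens) : tens := fun w => \sum_(k < size w) x (rotr k w).

Fixpoint contr (w : word) : K :=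
  match w with
  | i :: j :: r => cmat i j * contr r
  | [::] => 1
  | _ => 0
  end.

(* 1_V^{(x) n} (x) C^{(x) l} : contracts the last 2l tensor factors *)
Definition contractLast (l : nat) (x : tens) : tens :=
  fun w => \sum_(v : (l.*2).-tuple idx) x (w ++ v) * contr v.

Definition Cform (u v : vec) : K := \sum_(i : idx) \sum_(j : idx) u i * v j * cmat i j.

Fixpoint ContV (s : seq vec) : K :=
  match s with
  | u :: v :: r => Cform u v * ContV r
  | [::] => 1
  | _ => 0
  end.

(* matrix of pi : V(x)V -> Q, pi(x) = x - C(x)/(2g) omega_0:
   pi(e_i e_j) = sum_{a,b} pmat a b i j e_a e_b *)
Definition pmat (a b i j : idx) : K :=
  ((a == i) && (b == j))%:R - cmat a b * cmat i j / (g + g)%:R.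

(* pi (x) 1^{(x) n-4} (x) pi, applied in each degree n >= 4 *)
Definition piEnds (x : tens) : tens :=
  fun w => match w with
  | a :: b :: rest =>
      if (2 <= size rest)%N then
        let mid := take (size rest - 2) rest in
        let c := nth a rest (size rest - 2) in
        let d := nth a rest (size rest - 1) in
        \sum_(i : idx) \sum_(j : idx) \sum_(k : idx) \sum_(l : idx)
          pmat a b i j * pmat c d k l * x ([:: i; j] ++ mid ++ [:: k; l])
      else 0
  | _ => 0
  end.

(* u_i u_(i+1) ... u_j (empty product if j < i) *)
Definition uword (u : nat -> vec) (i j : nat) : tens :=
  tprod [seq tvec (u k) | k <- iota i (j.+1 - i)].

Definition contU (u : nat -> vec) (i j : nat) : K :=
  ContV [seq u k | k <- iota i (j.+1 - i)].

Definition Phi (m : nat) (u : nat -> vec) : tens :=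
  fun w => \sum_(1 <= k < m | odd k)
    (-1) ^+ ((k.-1)./2) *
    (contU u (m - k + 1) (m - 1) *
       tprod [:: tvec (u m); texp tomega ((k.-1)./2); uword u 1 (m - k)] w
     + contU u 2 k *
       tprod [:: uword u (k + 1) m; texp tomega ((k.-1)./2); tvec (u 1)] w).

End TensorDefs.

(* Main.v *)
Require Import Defs.
From mathcomp Require Import all_boot all_order all_algebra.
From Stdlib Require Import FunctionalExtensionality.
From mathcomp Require Import zify ring.
Import GRing.Theory.
Local Open Scope ring_scope.
Set Implicit Arguments. Unset Strict Implicit. Unset Printing Implicit Defensive.

Section Work.
Variables (K : fieldType) (g : nat).
Local Notation I := (idx g).
Local Notation W := (word g).
Local Notation T := (tens K g).
Local Notation cm := (@cmat K g).
Local Notation ct := (@contr K g).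
Local Notation pmat := (@pmat K g).

Fixpoint sumw (n : nat) (F : W -> K) : K :=
  if n is n'.+1 then \sum_(a : I) sumw n' (fun z => F (a :: z)) else F [::].

Lemma sumw_ext n F G : (forall v, size v = n -> F v = G v) -> sumw n F = sumw n G.
Proof.
elim: n F G => [|n IH] F G H /=; first by rewrite H.
apply: eq_bigr => a _; apply: IH => v hv; by rewrite H //= hv.
Qed.

Lemma sumwZ n c F : sumw n (fun v => c * F v) = c * sumw n F.
Proof.
elim: n F => [|n IH] F //=; rewrite mulr_sumr; apply: eq_bigr => a _; exact: IH.
Qed.

Lemma sumwZr n c F : sumw n (fun v => F v * c) = sumw n F * c.
Proof. rewrite mulrC -sumwZ; apply: sumw_ext => v _; exact: mulrC. Qed.

Lemma sumw_big n (J : Type) (r : seq J) (P : pred J) (F : J -> W -> K) :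
  sumw n (fun v => \sum_(j <- r | P j) F j v) = \sum_(j <- r | P j) sumw n (F j).
Proof.
elim: n F => [|n IH] F //=.
rewrite (eq_bigr (fun a => \sum_(j <- r | P j) sumw n (fun z => F j (a :: z)))).
  by rewrite exchange_big.
move=> a _; exact: (IH (fun j z => F j (a :: z))).
Qed.

Lemma sumw_cat n1 n2 F :
  sumw (n1 + n2) F = sumw n1 (fun z1 => sumw n2 (fun z2 => F (z1 ++ z2))).
Proof. by elim: n1 F => [|n1 IH] F //=; apply: eq_bigr => a _; rewrite IH. Qed.

Lemma sumwS n F : sumw n.+1 F = \sum_(a : I) sumw n (fun z => F (a :: z)).
Proof. by []. Qed.

Lemma sumw_pred n F : (0 < n)%N -> sumw n F = \sum_(a : I) sumw n.-1 (fun z => F (a :: z)).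
Proof. by case: n. Qed.

Lemma sumw1 F : sumw 1 F = \sum_(a : I) F [:: a].
Proof. by []. Qed.

Lemma tuple_sumw n (F : W -> K) :
  \sum_(v : n.-tuple I) F v = sumw n F.
Proof.
elim: n F => [|n IH] F /=.
  rewrite (big_pred1 [tuple]) //= => t; rewrite !inE; apply/esym/eqP; exact: tuple0.
have -> : \sum_(v : n.+1.-tuple I) F v =
          \sum_(p : I * n.-tuple I) F (cons_tuple p.1 p.2).
  rewrite (reindex (fun p : I * n.-tuple I => cons_tuple p.1 p.2)) //=.
  exists (fun t : n.+1.-tuple I => (thead t, behead_tuple t)).
    by move=> [a t] _ /=; congr pair; apply: val_inj.
  move=> t _; apply: val_inj => /=; case: t => [[|a s] //= _].
rewrite -(pair_big xpredT xpredT (fun a (t : n.-tuple I) => F (a :: t))) /=.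
by apply: eq_bigr => a _; exact: (IH (fun z => F (a :: z))).
Qed.


Definition sg (a : I) : K := if (a < g)%N then 1 else -1.
Definition partner (a : I) : I := insubd a (if (a < g)%N then a + g else a - g)%N.

Lemma val_partner a : val (partner a) = (if (a < g)%N then a + g else a - g)%N.
Proof.
rewrite /partner val_insubd; have ha := ltn_ord a; case: (ltnP a g) => h; rewrite ifT //; lia.
Qed.

Lemma cmatE a b : cm a b = if b == partner a then sg a else 0.
Proof.
rewrite /cmat /sg -(inj_eq val_inj) val_partner; have := ltn_ord a; have := ltn_ord b.
move=> hb ha; case: (ltnP a g) => h /=.
- case: eqP => h1 //; case: ifP => h2 //; lia.
- case: ifP => h2; case: eqP => h3 //; lia.
Qed.

Lemma partnerK a : partner (partner a) = a.
Proof.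
apply: val_inj; rewrite !val_partner; have := ltn_ord a.
case: (ltnP a g) => h /= ha; case: ifP => h2; lia.
Qed.

Lemma sg_partner a : sg (partner a) = - sg a.
Proof.
rewrite /sg val_partner; have := ltn_ord a.
case: (ltnP a g) => h; case: ifP => h2; rewrite ?opprK //; lia.
Qed.

Lemma sg2 a : sg a * sg a = 1.
Proof. by rewrite /sg; case: ifP; rewrite ?mulr1 ?mulrNN ?mulr1. Qed.

Lemma sum_cmat_l a (f : I -> K) : \sum_b cm a b * f b = sg a * f (partner a).
Proof.
rewrite (bigD1 (partner a)) //= cmatE eqxx big1 ?addr0 // => b hb.
by rewrite cmatE (negbTE hb) mul0r.
Qed.

Lemma sum_delta (F : I -> K) b : \sum_d F d * (d == b)%:R = F b.
Proof.
rewrite (bigD1 b) //= eqxx mulr1 big1 ?addr0 // => d hd.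
by rewrite (negbTE hd) mulr0.
Qed.

Lemma sum_delta' (F : I -> K) b : \sum_d (b == d)%:R * F d = F b.
Proof.
rewrite -[RHS](sum_delta F b); apply: eq_bigr => d _; by rewrite mulrC eq_sym.
Qed.

Lemma cmat2 a c : \sum_b cm a b * cm b c = - (a == c)%:R.
Proof.
rewrite sum_cmat_l cmatE partnerK sg_partner (eq_sym c).
by case: eqP => _; rewrite ?mulr0 ?oppr0 // mulrN sg2.
Qed.

Lemma sum_cmat_sq : \sum_a \sum_b cm a b * cm a b = (g + g)%:R.
Proof.
rewrite (eq_bigr (fun _ => 1)); first by rewrite sumr_const card_ord.
move=> a _; by rewrite sum_cmat_l cmatE eqxx sg2.
Qed.

Lemma contr_catn n p q : size p = n.*2 -> ct (p ++ q) = ct p * ct q.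
Proof.
elim: n p => [|n IH] [|a [|b p]] //=; try by move=> _; rewrite mul1r.
move=> [] h; rewrite IH ?mulrA //; lia.
Qed.

Lemma contr_cat p q : ~~ odd (size p) -> ct (p ++ q) = ct p * ct q.
Proof.
move=> h; apply: (@contr_catn (size p)./2); move: (odd_double_half (size p)).
by rewrite (negbTE h) add0n.
Qed.

Lemma contr_odd p a q : odd (size p) -> ct (p ++ a :: q) = ct (p ++ [:: a]) * ct q.
Proof.
move=> h; rewrite -cat1s catA contr_cat // size_cat /= addn1 /=; by rewrite h.
Qed.

Lemma chain n a b :
  sumw n.*2.+1 (fun v => ct (a :: v) * ct (v ++ [:: b])) = (-1) ^+ n.+1 * (a == b)%:R.
Proof.
elim: n a => [|n IH] a.
  rewrite /= (eq_bigr (fun c => cm a c * cm c b)); first by rewrite cmat2 expr1 mulN1r.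
  by move=> c _; rewrite !mulr1.
rewrite doubleS sumwS; under eq_bigr do rewrite sumwS.
have E c : \sum_d cm c d * ((-1) ^+ n.+1 * (d == b)%:R) = (-1) ^+ n.+1 * cm c b.
  rewrite (eq_bigr (fun d => ((-1) ^+ n.+1 * cm c d) * (d == b)%:R)) ?sum_delta //.
  by move=> d _; ring.
rewrite (eq_bigr (fun c => (-1) ^+ n.+1 * (cm a c * cm c b))).
  by rewrite -mulr_sumr cmat2 [in RHS]exprS mulN1r mulNr mulrN.
move=> c _; rewrite mulrA (mulrC _ (cm a c)) -mulrA -E mulr_sumr; apply: eq_bigr => d _.
rewrite -IH -!sumwZ; apply: sumw_ext => v _ /=; ring.
Qed.


Definition hom n (x : T) := forall w : W, size w != n -> x w = 0.

Lemma tmul_hom p (x y : T) w : hom p x ->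
  tmul x y w = if (p <= size w)%N then x (take p w) * y (drop p w) else 0.
Proof.
move=> hx; rewrite /tmul; case: leqP => h.
  have hp : (p < (size w).+1)%N by [].
  rewrite (bigD1 (Ordinal hp)) //= big1 ?addr0 // => k hk.
  rewrite hx ?mul0r // size_takel; last by rewrite -ltnS.
  by apply: contra hk => /eqP hk; apply/eqP/val_inj.
rewrite big1 // => k _; rewrite hx ?mul0r // size_takel; last by rewrite -ltnS.
by have := ltn_ord k; rewrite neq_ltn; lia.
Qed.

Lemma tmul_cat (x y : T) p q : hom (size p) x -> tmul x y (p ++ q) = x p * y q.
Proof.
move=> hx; rewrite (tmul_hom _ _ hx) size_cat leq_addr take_size_cat // drop_size_cat //.
Qed.

Lemma hom_tmul p q (x y : T) : hom p x -> hom q y -> hom (p + q) (tmul x y).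
Proof.
move=> hx hy w hw; rewrite (tmul_hom _ _ hx); case: ifP => // h.
rewrite hy ?mulr0 // size_drop; move: hw h; lia.
Qed.

Lemma hom_tvec v : hom 1 (tvec v).
Proof. by move=> [|a [|b w]]. Qed.

Lemma hom_tone : hom 0 (@tone K g).
Proof. by move=> [|a w]. Qed.

Lemma hom_tomega : hom 2 (@tomega K g).
Proof. by move=> [|a [|b [|c w]]]. Qed.

Lemma tmul_tone (x : T) w : tmul x (@tone K g) w = x w.
Proof.
rewrite /tmul big_ord_recr /= drop_size take_size /tone eqxx mulr1 big1 ?add0r // => k _.
rewrite /tone; case: eqP => [/(congr1 size)|]; rewrite ?mulr0 // size_drop /= => h.
by move/eqP: h; rewrite subn_eq0 leqNgt /= ltn_ord.
Qed.

Fixpoint pe (fs : seq (vec K g)) (z : W) : K :=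
  match fs, z with
  | [::], [::] => 1
  | f :: fs', a :: z' => f a * pe fs' z'
  | _, _ => 0
  end.

Lemma pe_size fs : hom (size fs) (pe fs).
Proof. by elim: fs => [|f fs IH] [|a z] //= h; rewrite IH ?mulr0. Qed.

Lemma pe_cat fs1 fs2 z1 z2 : size fs1 = size z1 ->
  pe (fs1 ++ fs2) (z1 ++ z2) = pe fs1 z1 * pe fs2 z2.
Proof.
elim: fs1 z1 => [|f fs IH] [|a z] //=; first by rewrite mul1r.
by move=> [] h; rewrite IH // mulrA.
Qed.

Lemma tprod_tvec (f : nat -> vec K g) s w :
  tprod [seq tvec (f k) | k <- s] w = pe [seq f k | k <- s] w.
Proof.
elim: s w => [|k s IH] [|a w] //=.
- rewrite (tmul_hom _ _ (@hom_tvec _)) //.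
- by rewrite -cat1s (@tmul_cat _ _ [:: a]) ?IH //; exact: hom_tvec.
Qed.

Lemma uwordE u i j w : uword u i j w = pe [seq u k | k <- iota i (j.+1 - i)] w.
Proof. exact: tprod_tvec. Qed.

Lemma hom_pe_map (u : nat -> vec K g) s : hom (size s) (pe [seq u k | k <- s]).
Proof. by have := @pe_size [seq u k | k <- s]; rewrite size_map. Qed.

Lemma texpE n w : texp (@tomega K g) n w = if size w == n.*2 then ct w else 0.
Proof.
elim: n w => [|n IH] w.
  by case: w.
rewrite /texp iterS -/(texp _ n) (tmul_hom _ _ hom_tomega).
case: w => [|a [|b w]] //=; rewrite drop0 take0 IH doubleS eqSS.
by rewrite eqSS; case: ifP; rewrite ?mulr0.
Qed.

Lemma hom_texp n : hom n.*2 (texp (@tomega K g) n).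
Proof. by move=> w hw; rewrite texpE (negbTE hw). Qed.

Lemma sum_pe_contr fs : sumw (size fs) (fun z => pe fs z * ct z) = ContV fs.
Proof.
move: {2}(size fs) (leqnn (size fs)) => n; elim: n fs => [|n IH] [|f1 [|f2 r]] //= h.
- by rewrite mulr1.
- by rewrite mulr1.
- by rewrite big1 // => a _; rewrite !mulr0.
- rewrite /Cform mulr_suml; apply: eq_bigr => a _; rewrite mulr_suml; apply: eq_bigr => b _.
  rewrite -(IH r); last by lia.
  rewrite -sumwZ; apply: sumw_ext => z _ /=; ring.
Qed.

Lemma sum_contr_sq n : sumw n.*2 (fun v => ct v * ct v) = (g + g)%:R ^+ n.
Proof.
elim: n => [|n IH]; first by rewrite /= mulr1.
rewrite doubleS sumwS exprS -{1}sum_cmat_sq mulr_suml; apply: eq_bigr => a _.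
rewrite sumwS mulr_suml; apply: eq_bigr => b _.
by rewrite -IH -sumwZ; apply: sumw_ext => z _ /=; ring.
Qed.


Section Pi.
Hypothesis hg : (0 < g)%N.
Hypothesis hK : [pchar K] =i pred0.

Lemma i0P : (0 < g + g)%N. Proof. lia. Qed.
Lemma j0P : (g < g + g)%N. Proof. lia. Qed.
Definition i0 : I := Ordinal i0P.
Definition j0 : I := Ordinal j0P.

Lemma cm_i0j0 : cm i0 j0 = 1.
Proof. by rewrite /cmat /= hg add0n eqxx. Qed.

Lemma hN : (g + g)%:R != 0 :> K.
Proof. by rewrite ((pcharf0P K).1 hK); lia. Qed.

Lemma sum_pmat_cmat a b : \sum_i \sum_j pmat a b i j * cm i j = 0.
Proof.
pose N : K := (g + g)%:R.
rewrite (eq_bigr (fun i => (a == i)%:R * \sum_j ((b == j)%:R * cm i j)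
                         - cm a b / N * \sum_j (cm i j * cm i j))).
  rewrite sumrB sum_delta' sum_delta' -mulr_sumr sum_cmat_sq mulfVK ?subrr //; exact: hN.
move=> i _; rewrite !mulr_sumr -sumrB; apply: eq_bigr => j _.
rewrite /pmat; case: (a == i); case: (b == j); rewrite /= ?mul1r ?mul0r; ring.
Qed.

Definition Null (x : T) := forall w, piEnds x w = 0.

Lemma killL (x : T) : (forall i j z, x (i :: j :: z) = cm i j * x (i0 :: j0 :: z)) -> Null x.
Proof.
move=> hx [|a [|b rest]] //=; case: ifP => // _.
move: (take _ rest) (nth a rest (size rest - 2)) (nth a rest (size rest - 1)) => mid c d.
pose G := \sum_k \sum_l pmat c d k l * x (i0 :: j0 :: (mid ++ [:: k; l])).
transitivity (\sum_i \sum_j pmat a b i j * cm i j * G).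
  apply: eq_bigr => i _; apply: eq_bigr => j _; rewrite /G mulr_sumr; apply: eq_bigr => k _.
  rewrite mulr_sumr; apply: eq_bigr => l _; rewrite hx; ring.
have E : \sum_i \sum_j pmat a b i j * cm i j * G = (\sum_i \sum_j pmat a b i j * cm i j) * G.
  by rewrite mulr_suml; apply: eq_bigr => i _; rewrite mulr_suml.
by rewrite E sum_pmat_cmat mul0r.
Qed.

Lemma killR (x : T) : (forall z i j, x (z ++ [:: i; j]) = cm i j * x (z ++ [:: i0; j0])) -> Null x.
Proof.
move=> hx [|a [|b rest]] //=; case: ifP => // _.
move: (take _ rest) (nth a rest (size rest - 2)) (nth a rest (size rest - 1)) => mid c d.
apply: big1 => i _; apply: big1 => j _.
transitivity (pmat a b i j * x ((i :: j :: mid) ++ [:: i0; j0]) * \sum_k \sum_l pmat c d k l * cm k l).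
  rewrite mulr_sumr; apply: eq_bigr => k _; rewrite mulr_sumr; apply: eq_bigr => l _.
  rewrite (_ : i :: j :: (mid ++ [:: k; l]) = (i :: j :: mid) ++ [:: k; l]) // hx; ring.
by rewrite sum_pmat_cmat mulr0.
Qed.

Lemma piEnds_ext (x y : T) : (forall w, x w = y w) -> piEnds x = piEnds y.
Proof. by move=> h; have -> : x = y by apply: functional_extensionality. Qed.

Lemma piEnds_add (x y : T) w : piEnds (tadd x y) w = piEnds x w + piEnds y w.
Proof.
case: w => [|a [|b rest]] /=; rewrite ?addr0 //; case: ifP => _; rewrite ?addr0 //.
rewrite -big_split; apply: eq_bigr => i _; rewrite -big_split; apply: eq_bigr => j _.
rewrite -big_split; apply: eq_bigr => k _; rewrite -big_split; apply: eq_bigr => l _.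
by rewrite /tadd mulrDr.
Qed.

Lemma Null0 : Null (fun _ => 0).
Proof.
case=> [|a [|b rest]] //=; case: ifP => // _.
by apply: big1 => i _; apply: big1 => j _; apply: big1 => k _; apply: big1 => l _; rewrite mulr0.
Qed.

Lemma Null_add x y : Null x -> Null y -> Null (tadd x y).
Proof. by move=> hx hy w; rewrite piEnds_add hx hy addr0. Qed.

Lemma Null_ext x y : (forall w, x w = y w) -> Null x -> Null y.
Proof. by move=> h hx w; rewrite -(piEnds_ext h). Qed.

Lemma Null_sum (r : seq nat) (P : pred nat) (F : nat -> T) :
  (forall k, k \in r -> P k -> Null (F k)) -> Null (fun w => \sum_(k <- r | P k) F k w).
Proof.
elim: r => [|a r IH] hF.
  by apply: (Null_ext _ Null0) => w; rewrite big_nil.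
have IH' := IH (fun k hk => hF k (mem_behead (s := a :: r) hk)).
case hP: (P a).
  apply: (Null_ext _ (Null_add (hF a (mem_head _ _) hP) IH')) => w; by rewrite big_cons hP.
by apply: (Null_ext _ IH') => w; rewrite big_cons hP.
Qed.



Section Main.
Variables (u : nat -> vec K g) (m l : nat).
Hypotheses (hmodd : odd m) (hm : (5 <= m)%N) (hl : (m.+1 <= l.*2)%N).

Definition us := [seq u k | k <- iota 1 (m.+1 - 1)].
Definition X := tmul (uword u 1 m) (texp (@tomega K g) l).

Lemma hom_eq p q (x : T) : p = q -> hom p x -> hom q x.
Proof. by move=> ->. Qed.

Lemma hom_U : hom m (uword u 1 m).
Proof.
move=> w hw; rewrite uwordE; apply: hom_pe_map; rewrite size_iota; move: hw; lia.
Qed.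

Lemma X_cat p q : size p = m -> size q = l.*2 -> X (p ++ q) = pe us p * ct q.
Proof.
move=> hp hq; rewrite /X tmul_cat ?hp; last exact: hom_U.
by rewrite uwordE texpE hq eqxx.
Qed.

Lemma X_size y : size y != (m + l.*2)%N -> X y = 0.
Proof. move=> hy; rewrite /X; exact: (hom_tmul hom_U (hom_texp (n:=l)) hy). Qed.

Lemma X_pair p i j q : (m <= size p)%N -> ~~ odd (size p - m) ->
  X (p ++ [:: i; j] ++ q) = cm i j * X (p ++ [:: i0; j0] ++ q).
Proof.
move=> h1 h2; rewrite -(cat_take_drop m p) -!catA /X.
have ht : size (take m p) = m by rewrite size_takel.
rewrite !tmul_cat ?ht; try exact: hom_U.
rewrite !texpE !size_cat /= !contr_cat ?size_drop //= cm_i0j0.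
by case: ifP => _; ring.
Qed.

Definition Tk k (w : W) := sumw l.*2 (fun v => X (rotr k (w ++ v)) * ct v).

Lemma LHS_decomp w :
  contractLast l (cyc X) w = \sum_(k < m + l.*2) Tk k w.
Proof.
rewrite /contractLast (tuple_sumw _ (fun v => cyc X (w ++ v) * ct v)).
case: (eqVneq (size w) m) => hw.
  rewrite -sumw_big; apply: sumw_ext => v hv.
  by rewrite /cyc size_cat hw hv mulr_suml.
rewrite big1 => [|k _]; last first.
  rewrite /Tk (sumw_ext (G := fun _ => 0 * 0)) ?sumwZ ?mul0r // => v hv.
  by rewrite X_size ?mul0r // size_rotr size_cat hv; move: hw; lia.
rewrite (sumw_ext (G := fun _ => 0 * 0)) ?sumwZ ?mul0r // => v hv.
rewrite /cyc big1 ?mul0r // => k _.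
by rewrite X_size // size_rotr size_cat hv; move: hw; lia.
Qed.

Lemma Tk0 w : Tk 0 w = (g + g)%:R ^+ l * uword u 1 m w.
Proof.
have r0 (s : W) : rotr 0 s = s by rewrite /rotr subn0 rot_size.
rewrite /Tk; case: (eqVneq (size w) m) => hw.
  rewrite (sumw_ext (G := fun v => pe us w * (ct v * ct v))).
    by rewrite sumwZ sum_contr_sq mulrC uwordE.
  by move=> v hv; rewrite r0 X_cat // mulrA.
rewrite hom_U // mulr0 (sumw_ext (G := fun _ => 0 * 0)) ?sumwZ ?mul0r // => v hv.
by rewrite X_size ?mul0r // size_rotr size_cat hv; move: hw; lia.
Qed.

Lemma rot1 (w v : W) k : size v = l.*2 -> (k <= l.*2)%N ->
  rotr k (w ++ v) = drop (l.*2 - k) v ++ w ++ take (l.*2 - k) v.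
Proof.
move=> hv hk; set d := (l.*2 - k)%N; rewrite -{1}(cat_take_drop d v) catA.
have hs : size (drop d v) = k by rewrite size_drop hv /d; lia.
by rewrite -{1}hs rotr_size_cat.
Qed.

Lemma NullR k : (forall (z v : W), size v = l.*2 -> size z + 2 = m ->
   exists p q : W, (forall i j, rotr k ((z ++ [:: i; j]) ++ v) = p ++ [:: i; j] ++ q)
     /\ (m <= size p)%N /\ ~~ odd (size p - m)) -> Null (Tk k).
Proof.
move=> H; apply: killR => z i j; rewrite /Tk -sumwZ; apply: sumw_ext => v hv.
case: (eqVneq (size z + 2) m)%N => hz.
  have [p [q [e [h1 h2]]]] := H z v hv hz.
  by rewrite !e X_pair // mulrA.
rewrite !X_size ?mul0r ?mulr0 // size_rotr !size_cat hv /=; move: hz; lia.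
Qed.

Lemma NullL k : (forall (z v : W), size v = l.*2 -> size z + 2 = m ->
   exists p q : W, (forall i j, rotr k ([:: i, j & z] ++ v) = p ++ [:: i; j] ++ q)
     /\ (m <= size p)%N /\ ~~ odd (size p - m)) -> Null (Tk k).
Proof.
move=> H; apply: killL => i j z; rewrite /Tk -sumwZ; apply: sumw_ext => v hv.
case: (eqVneq (size z + 2) m)%N => hz.
  have [p [q [e [h1 h2]]]] := H z v hv hz.
  by rewrite !e X_pair // mulrA.
rewrite !X_size ?mul0r ?mulr0 // size_rotr !size_cat hv /=; move: hz; lia.
Qed.


Lemma junkB k : (1 <= k < m)%N -> ~~ odd k -> Null (Tk k).
Proof.
move=> hk hodd; apply: NullR => z v hv hz.
exists (drop (l.*2 - k) v ++ z), (take (l.*2 - k) v); split.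
  by move=> i j; rewrite rot1 // ?catA //; lia.
rewrite size_cat size_drop hv; split; lia.
Qed.

Lemma junkMid k : (m <= k <= l.*2)%N -> Null (Tk k).
Proof.
move=> hk; case: (boolP (odd (k - m))) => ho.
  apply: NullR => z v hv hz.
  exists (drop (l.*2 - k) v ++ z), (take (l.*2 - k) v); split.
    by move=> i j; rewrite rot1 // ?catA //; lia.
  rewrite size_cat size_drop hv; split; lia.
apply: NullL => z v hv hz.
exists (drop (l.*2 - k) v), (z ++ take (l.*2 - k) v); split.
  by move=> i j; rewrite rot1 //; lia.
rewrite size_drop hv; split; lia.
Qed.

Lemma junkC s : odd s -> (s < m)%N -> Null (Tk (l.*2 + s)).
Proof.
move=> hs hsm; apply: NullL => z v hv hz.
have hw2 : size (drop (m - 2 - s) z) = s by rewrite size_drop; lia.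
exists (drop (m - 2 - s) z ++ v), (take (m - 2 - s) z); split.
  move=> i j.
  have e : [:: i, j & z] = [:: i, j & take (m - 2 - s) z] ++ drop (m - 2 - s) z.
    by rewrite /= cat_take_drop.
  rewrite e (_ : (l.*2 + s)%N = size (drop (m - 2 - s) z ++ v)); last first.
    by rewrite size_cat hw2 hv addnC.
  by rewrite -catA rotr_size_cat.
rewrite size_cat hw2 hv; split; lia.
Qed.

Definition Bt k := tprod [:: uword u (k + 1) m; texp (@tomega K g) ((k.-1)./2); tvec (u 1)].
Definition At k := tprod [:: tvec (u m); texp (@tomega K g) ((k.-1)./2); uword u 1 (m - k)].

Lemma hom_Bt k : (k < m)%N -> odd k -> hom m (Bt k).
Proof.
move=> hkm hk.
have H : hom ((m.+1 - (k + 1)) + (((k.-1)./2).*2 + (1 + 0)))%N (Bt k); last first.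
  by apply: (hom_eq _ H); lia.
apply: hom_tmul; first by move=> z hz; rewrite uwordE hom_pe_map // size_iota.
apply: hom_tmul; first exact: hom_texp.
apply: hom_tmul; [exact: hom_tvec | exact: hom_tone].
Qed.

Lemma MB k w : odd k -> (k < m)%N ->
  Tk k w = (-1) ^+ l * ((-1) ^+ ((k.-1)./2) * (contU u 2 k * Bt k w)).
Proof.
move=> hk hkm.
case: (eqVneq (size w) m) => hw; last first.
  rewrite /Tk (sumw_ext (G := fun _ => 0 * 0)) ?sumwZ ?mul0r.
    by rewrite hom_Bt // !mulr0.
  by move=> v hv; rewrite X_size ?mul0r // size_rotr size_cat hv; move: hw; lia.
have hB := hom_Bt hkm hk.
set j := (k.-1)./2 in hB *.
have hkj : k = j.*2.+1 by rewrite /j; lia.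
set n := (l - j - 1)%N.
have hn : (l.*2 - k = n.*2.+1)%N by rewrite /n; lia.
have hsign : (-1) ^+ l * (-1) ^+ j = (-1) ^+ n.+1 :> K.
  have sq : (-1) ^+ j * (-1) ^+ j = 1 :> K by rewrite -exprMn mulrNN mulr1 expr1n.
  by rewrite {1}(_ : l = n.+1 + j)%N ?exprD -?mulrA ?sq ?mulr1 // /n; lia.
move: (cat_take_drop (m - k) w) (size_drop (m - k) w).
case/lastP: (drop (m - k) w) => [|w3 a] E hs.
  by exfalso; move: hs; rewrite /= hw; lia.
rewrite -E -cats1; set w1 := take (m - k) w.
have h1 : size w1 = (m - k)%N by rewrite size_takel // hw; lia.
have h3 : size w3 = j.*2 by move: hs; rewrite size_rcons hw; lia.
set us1 := [seq u i | i <- iota 2 (k.+1 - 2)].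
set us2 := [seq u i | i <- iota (k + 1) (m.+1 - (k + 1))].
have hus : us = u 1 :: us1 ++ us2.
  rewrite /us (_ : (m.+1 - 1 = 1 + ((k.+1 - 2) + (m.+1 - (k + 1))))%N); last lia.
  rewrite iotaD iotaD !map_cat (_ : (1 + 1 + (k.+1 - 2))%N = (k + 1)%N) //; lia.
have hus1 : size us1 = j.*2 by rewrite size_map size_iota; lia.
have -> : Bt k (w1 ++ w3 ++ [:: a]) = pe us2 w1 * (ct w3 * u 1 a).
  rewrite /Bt /= tmul_cat; last by move=> z hz; rewrite uwordE hom_pe_map // size_iota; move: hz; rewrite h1; lia.
  rewrite tmul_cat; last by move=> z hz; rewrite hom_texp // -h3.
  by rewrite tmul_tone uwordE texpE h3 eqxx.
pose C := pe us2 w1 * ct w3.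
rewrite /Tk (_ : l.*2 = (l.*2 - k) + k)%N; last lia.
rewrite sumw_cat.
rewrite (sumw_ext (G := fun v1 => \sum_b (C * ContV us1 * u 1 b) * (ct (a :: v1) * ct (v1 ++ [:: b])))).
  rewrite sumw_big (eq_bigr (fun b => C * ContV us1 * u 1 b * ((-1) ^+ n.+1 * (a == b)%:R))); last first.
    by move=> b _; rewrite sumwZ hn chain.
  rewrite (eq_bigr (fun b => (a == b)%:R * (C * ContV us1 * u 1 b * (-1) ^+ n.+1))); last by move=> b _; ring.
  rewrite sum_delta' mulrA hsign (_ : contU u 2 k = ContV us1) // /C; ring.
move=> v1 hv1; rewrite sumw_pred; last lia.
apply: eq_bigr => b _.
rewrite -(sum_pe_contr us1) hus1 (_ : k.-1 = j.*2); last lia.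
rewrite -sumwZ -sumwZr -sumwZr; apply: sumw_ext => v2 hv2.
have hs2 : size (b :: v2) = k by rewrite /= hv2; lia.
rewrite catA -[in rotr k _]hs2 rotr_size_cat.
have -> : (b :: v2) ++ (w1 ++ w3 ++ [:: a]) ++ v1 = (b :: v2 ++ w1) ++ (w3 ++ a :: v1).
  by rewrite /= -!catA.
rewrite X_cat; first last.
- by rewrite size_cat h3 /= hv1; lia.
- by rewrite /= size_cat hv2 h1; lia.
rewrite hus /= pe_cat ?hus1 //.
rewrite contr_cat ?h3 ?odd_double //.
rewrite contr_odd ?hv1 ?hn /= ?odd_double //.
rewrite /C; ring.
Qed.

Lemma hom_At k : (k < m)%N -> odd k -> hom m (At k).
Proof.
move=> hkm hk.
have H : hom (1 + (((k.-1)./2).*2 + ((m - k).+1 - 1 + 0)))%N (At k); last first.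
  by apply: (hom_eq _ H); lia.
apply: hom_tmul; first exact: hom_tvec.
apply: hom_tmul; first exact: hom_texp.
apply: hom_tmul; last exact: hom_tone.
by move=> z hz; rewrite uwordE hom_pe_map // size_iota.
Qed.

Lemma MA k w : odd k -> (k < m)%N ->
  Tk (l.*2 + (m - k)) w = (-1) ^+ l * ((-1) ^+ ((k.-1)./2) * (contU u (m - k + 1) (m - 1) * At k w)).
Proof.
move=> hk hkm.
case: (eqVneq (size w) m) => hw; last first.
  rewrite /Tk (sumw_ext (G := fun _ => 0 * 0)) ?sumwZ ?mul0r.
    by rewrite hom_At // !mulr0.
  by move=> v hv; rewrite X_size ?mul0r // size_rotr size_cat hv; move: hw; lia.
have hA := hom_At hkm hk.
set j := (k.-1)./2 in hA *.
have hkj : k = j.*2.+1 by rewrite /j; lia.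
set n := (l - j - 1)%N.
have hn : (l.*2 - k = n.*2.+1)%N by rewrite /n; lia.
have hsign : (-1) ^+ l * (-1) ^+ j = (-1) ^+ n.+1 :> K.
  have sq : (-1) ^+ j * (-1) ^+ j = 1 :> K by rewrite -exprMn mulrNN mulr1 expr1n.
  by rewrite {1}(_ : l = n.+1 + j)%N ?exprD -?mulrA ?sq ?mulr1 // /n; lia.
have hkw : (k <= size w)%N by rewrite hw; lia.
move: (cat_take_drop k w) (size_takel hkw).
case: (take k w) => [|a w1] E hs.
  by exfalso; move: hs; rewrite /=; lia.
rewrite -E; set w2 := drop k w.
have h1 : size w1 = j.*2 by move: hs; rewrite /=; lia.
have h2 : size w2 = (m - k)%N by rewrite size_drop hw.
set us1 := [seq u i | i <- iota 1 ((m - k).+1 - 1)].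
set us2 := [seq u i | i <- iota (m - k + 1) ((m - 1).+1 - (m - k + 1))].
have hus : us = us1 ++ us2 ++ [:: u m].
  rewrite /us (_ : (m.+1 - 1 = ((m - k).+1 - 1) + (((m - 1).+1 - (m - k + 1)) + 1))%N); last lia.
  rewrite iotaD iotaD !map_cat.
  have e1 : (1 + ((m - k).+1 - 1) = m - k + 1)%N by lia.
  rewrite e1.
  have e2 : (m - k + 1 + ((m - 1).+1 - (m - k + 1)) = m)%N by lia.
  by rewrite e2.
have hus1 : size us1 = (m - k)%N by rewrite size_map size_iota; lia.
have hus2 : size us2 = j.*2 by rewrite size_map size_iota; lia.
have -> : At k ((a :: w1) ++ w2) = u m a * (ct w1 * pe us1 w2).
  rewrite /At /= -cat1s tmul_cat; last exact: hom_tvec.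
  rewrite tmul_cat; last by move=> z hz; rewrite hom_texp // -h1.
  by rewrite tmul_tone uwordE texpE h1 eqxx.
pose C := pe us1 w2 * ct w1.
rewrite /Tk (sumw_ext (G := fun v => X ((w2 ++ v) ++ a :: w1) * ct v)); last first.
  move=> v hv; rewrite (_ : (l.*2 + (m - k))%N = size (w2 ++ v)); last by rewrite size_cat hv h2 addnC.
  by rewrite -catA rotr_size_cat.
rewrite (_ : l.*2 = (j.*2 + (n.*2.+1).+1)%N); last lia.
rewrite sumw_cat.
rewrite (sumw_ext (G := fun v1 => (pe us2 v1 * ct v1) * (C * u m a * (-1) ^+ n.+1))).
  rewrite sumwZr -{1}hus2 sum_pe_contr [RHS]mulrA hsign (_ : contU u (m - k + 1) (m - 1) = ContV us2) // /C.
  ring.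
move=> v1 hv1; rewrite sumwS.
rewrite (eq_bigr (fun b => (pe us2 v1 * ct v1) * (C * u m b) * ((-1) ^+ n.+1 * (b == a)%:R))).
  rewrite (eq_bigr (fun b => ((pe us2 v1 * ct v1) * (C * u m b) * (-1) ^+ n.+1) * (b == a)%:R)).
    by rewrite sum_delta; ring.
  by move=> b _; ring.
move=> b _; rewrite -chain -sumwZ; apply: sumw_ext => v2 hv2.
have -> : (w2 ++ v1 ++ b :: v2) ++ a :: w1 = (w2 ++ v1 ++ [:: b]) ++ (v2 ++ a :: w1).
  by rewrite -!catA.
rewrite X_cat; first last.
- by rewrite size_cat /= hv2 h1; lia.
- by rewrite !size_cat h2 hv1 /=; lia.
rewrite hus pe_cat ?hus1 // pe_cat ?hus2 //.
rewrite contr_odd ?hv2 /= ?odd_double //.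
rewrite (@contr_cat v1) ?hv1 ?odd_double //.
rewrite /C /=; ring.
Qed.


Definition Jt : T := fun w =>
  \sum_(1 <= k < m | ~~ odd k) (Tk k w + Tk (l.*2 + (m - k)) w)
  + \sum_(m <= k < l.*2.+1) Tk k w.

Lemma NullJ : Null Jt.
Proof.
apply: (Null_ext _ (Null_add (Null_sum (r := index_iota 1 m) (P := fun k => ~~ odd k)
   (F := fun k => tadd (Tk k) (Tk (l.*2 + (m - k)))) _)
   (Null_sum (r := index_iota m l.*2.+1) (P := xpredT) (F := Tk) _))).
  by move=> w.
- move=> k; rewrite mem_index_iota => hk hodd; apply: Null_add.
    exact: junkB.
  apply: junkC; lia.
- move=> k; rewrite mem_index_iota => hk _; apply: junkMid; lia.
Qed.

Lemma decomp w : contractLast l (cyc X) w =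
  tadd (tadd (tscale ((g + g)%:R ^+ l) (uword u 1 m)) (tscale ((-1) ^+ l) (Phi m u))) Jt w.
Proof.
rewrite LHS_decomp -(big_mkord xpredT (fun k => Tk k w)).
rewrite big_ltn; last lia.
rewrite (big_cat_nat _ (n := m)) //=; last lia.
rewrite (big_cat_nat _ (m := m) (n := l.*2.+1)) //=; try lia.
have -> : \sum_(l.*2.+1 <= k < m + l.*2) Tk k w = \sum_(1 <= k < m) Tk (l.*2 + (m - k)) w.
  rewrite -(add1n l.*2) big_addn (_ : (m + l.*2 - l.*2 = m)%N); last lia.
  rewrite big_nat_rev [LHS]big_nat_cond [RHS]big_nat_cond; apply: eq_bigr => k /andP [hk _].
  congr Tk; lia.
rewrite /tadd /tscale Tk0.
have E1 : \sum_(1 <= k < m) Tk k w + \sum_(1 <= k < m) Tk (l.*2 + (m - k)) w =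
   \sum_(1 <= k < m | odd k) (Tk k w + Tk (l.*2 + (m - k)) w) +
   \sum_(1 <= k < m | ~~ odd k) (Tk k w + Tk (l.*2 + (m - k)) w).
  by rewrite -big_split (bigID odd).
have E2 : \sum_(1 <= k < m | odd k) (Tk k w + Tk (l.*2 + (m - k)) w) = (-1) ^+ l * Phi m u w.
  rewrite /Phi mulr_sumr [LHS]big_nat_cond [RHS]big_nat_cond; apply: eq_bigr => k /andP [/andP [h1 h2] hk].
  rewrite MB // MA // -/(At k) -/(Bt k); ring.
rewrite /Jt -E2; move: E1.
set S1 := \sum_(1 <= k < m) Tk k w.
set S3 := \sum_(1 <= k < m) Tk (l.*2 + (m - k)) w.
move=> E1.
have -> : S1 + (\sum_(m <= i < l.*2.+1) Tk i w + S3) = (S1 + S3) + \sum_(m <= i < l.*2.+1) Tk i w by ring.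
rewrite E1; ring.
all: lia.
Qed.

End Main.
End Pi.
End Work.

Theorem lemma5p3 (K : fieldType) (hK : [pchar K] =i pred0) (g : nat)
  (hg : (0 < g)%N) (m l : nat) (hmodd : odd m) (hm : (5 <= m)%N)
  (hl : (m.+1 <= l.*2)%N) (u : nat -> vec K g) :
  piEnds (contractLast l (cyc (tmul (uword u 1 m) (texp (@tomega K g) l)))) =
  piEnds (tadd (tscale ((g + g)%:R ^+ l) (uword u 1 m))
               (tscale ((-1) ^+ l) (Phi m u))).
Proof.
rewrite (piEnds_ext (@decomp K g hg u m l hmodd hm hl)).
apply: functional_extensionality => w.
by rewrite piEnds_add (@NullJ K g hg hK u m l hmodd hm hl w) addr0.
Qed.
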